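(* Let $d\geq 2$ and let $\mathsf{M}_1,\mathsf{M}_2$ be two $d$-outcome POVMs (outcomes labelled $1,\dots,d$) on $\mathbb{C}^d$. If $\mathsf{M}_1$ and $\mathsf{M}_2$ are compatible, then $$\bar{P}_{\rm qrac}(\mathsf{M}_1,\mathsf{M}_2)=\frac{1}{2d^2}\sum_{x,y=1}^d \big\|\mathsf{M}_1(x)+\mathsf{M}_2(y)\big\| \leq \frac12\left(1+\frac1d\right),$$ i.e. a compatible pair of $d$-outcome measurements is not useful for $(2,d)$-QRAC.
   Context: $\|\cdot\|$ is the operator norm. Two POVMs $\mathsf{M}_1$ (outcomes $x$) and $\mathsf{M}_2$ (outcomes $y$) are compatible if there exists a POVM $\mathsf{G}$ on the product outcome set with $\sum_y \mathsf{G}(x,y)=\mathsf{M}_1(x)$ and $\sum_x\mathsf{G}(x,y)=\mathsf{M}_2(y)$ for all $x,y$; otherwise incompatible. In the $(2,d)$ quantum random access code, Alice receives two dits $(x_1,x_2)$ uniformly at random and sends a state $\mathcal{E}(x_1,x_2)$ on $\mathbb{C}^d$; Bob receives $j\in\{1,2\}$ uniformly and measures $\mathsf{M}_j$, succeeding if the outcome is $x_j$. $\bar P_{\rm qrac}(\mathsf{M}_1,\mathsf{M}_2)$ is the average success probability with the encoding optimized, which equals the displayed norm expression. The quantity $\frac12(1+\frac1d)$ is the optimal average success probability of the classical $(2,d)$ random access code; a pair is called useful for $(2,d)$-QRAC if $\bar P_{\rm qrac}$ strictly exceeds it. *)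

(* Defs.v *)
From HB Require Import structures.
From mathcomp Require Import all_boot all_order all_algebra.
From mathcomp Require Import complex.
From mathcomp Require Import classical_sets reals.
Set Implicit Arguments. Unset Strict Implicit. Unset Printing Implicit Defensive.
Import Order.TTheory GRing.Theory Num.Theory.
Local Open Scope ring_scope.
Local Open Scope complex_scope.

Section Defs.
Variable R : realType.
Notation C := (R[i]).

Definition adjmx (m n : nat) (A : 'M[C]_(m, n)) : 'M[C]_(n, m) :=
  (map_mx (fun z : C => z^*) A)^T.

(* positive semidefinite: <v, A v> is a nonnegative real for every v *)
Definition psd (d : nat) (A : 'M[C]_d) : Prop :=
  forall v : 'cV[C]_d, 0 <= (adjmx v *m A *m v) 0 0.

Definition is_povm (d : nat) (X : finType) (M : X -> 'M[C]_d) : Prop :=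
  (forall x, psd (M x)) /\ \sum_(x : X) M x = 1%:M.

Definition csq (z : C) : R := (complex.Re z) ^+ 2 + (complex.Im z) ^+ 2.
Definition vnormsq (d : nat) (v : 'cV[C]_d) : R := \sum_i csq (v i 0).

Definition opnorm (d : nat) (A : 'M[C]_d) : R :=
  Num.sqrt (reals.sup [set vnormsq (A *m v) | v in [set v : 'cV[C]_d | vnormsq v = 1]]%classic).

Definition compatible (d : nat) (X Y : finType)
    (M1 : X -> 'M[C]_d) (M2 : Y -> 'M[C]_d) : Prop :=
  exists G : X -> Y -> 'M[C]_d,
    is_povm (fun p : X * Y => G p.1 p.2) /\
    (forall x, \sum_(y : Y) G x y = M1 x) /\
    (forall y, \sum_(x : X) G x y = M2 y).

(* average success probability of the (2,d)-QRAC with optimized encoding,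
   given by the norm formula *)
Definition Pqrac (d : nat) (M1 M2 : 'I_d -> 'M[C]_d) : R :=
  (2 * (d%:R) ^+ 2)^-1 * \sum_(x < d) \sum_(y < d) opnorm (M1 x + M2 y).

End Defs.

(* Main.v *)
Require Import Defs.
From HB Require Import structures.
From mathcomp Require Import all_boot all_order all_algebra.
From mathcomp Require Import complex reals.
From mathcomp Require Import ring lra.
Import Order.TTheory GRing.Theory Num.Theory.
Local Open Scope ring_scope.
Local Open Scope complex_scope.

Section S.
Variable R : realType.
Notation C := (R[i]).

Lemma ReD (x y : C) : complex.Re (x + y) = complex.Re x + complex.Re y.
Proof. by case: x => a b; case: y => c e. Qed.
Lemma ImD (x y : C) : complex.Im (x + y) = complex.Im x + complex.Im y.
Proof. by case: x => a b; case: y => c e. Qed.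
Lemma ReM (x y : C) : complex.Re (x * y) = complex.Re x * complex.Re y - complex.Im x * complex.Im y.
Proof. by case: x => a b; case: y => c e. Qed.
Lemma ImM (x y : C) : complex.Im (x * y) = complex.Re x * complex.Im y + complex.Im x * complex.Re y.
Proof. by case: x => a b; case: y => c e. Qed.
Lemma ReJ (x : C) : complex.Re (x^*) = complex.Re x.
Proof. by case: x. Qed.
Lemma ImJ (x : C) : complex.Im (x^*) = - complex.Im x.
Proof. by case: x. Qed.
Lemma ReN (x : C) : complex.Re (- x) = - complex.Re x.
Proof. by case: x. Qed.
Lemma ImN (x : C) : complex.Im (- x) = - complex.Im x.
Proof. by case: x. Qed.
Lemma ReC (x : R) : complex.Re (x%:C) = x. Proof. by []. Qed.
Lemma ImC (x : R) : complex.Im (x%:C) = 0. Proof. by []. Qed.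
Lemma Re_sum (I : Type) (r : seq I) (P : pred I) (F : I -> C) :
  complex.Re (\sum_(i <- r | P i) F i) = \sum_(i <- r | P i) complex.Re (F i).
Proof. by elim/big_rec2: _ => // i y1 y2 _ <-; rewrite ReD. Qed.
Lemma cge0 (x : C) : (0 <= x) <-> (complex.Im x = 0 /\ 0 <= complex.Re x).
Proof. case: x => a b; rewrite lecE /=; split; [by case/andP => /eqP -> | by case=> -> ->; rewrite eqxx]. Qed.
Lemma conj_self (z : C) : z^* * z = (csq z)%:C.
Proof. case: z => a b; apply/eqP; rewrite eq_complex /= /csq /=; apply/andP; split; apply/eqP; ring. Qed.
Variable d : nat.
Implicit Types (u w v : 'cV[C]_d) (K : 'M[C]_d).

Definition ip u w : C := \sum_i (u i 0)^* * w i 0.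

Lemma ipE u w : (adjmx u *m w) 0 0 = ip u w.
Proof. rewrite mxE; apply: eq_bigr => i _; by rewrite !mxE. Qed.
Lemma ipDr u w1 w2 : ip u (w1 + w2) = ip u w1 + ip u w2.
Proof. rewrite /ip -big_split; apply: eq_bigr => i _; by rewrite mxE mulrDr. Qed.
Lemma ipZr u c w : ip u (c *: w) = c * ip u w.
Proof. rewrite /ip mulr_sumr; apply: eq_bigr => i _; by rewrite mxE mulrCA. Qed.
Lemma ipDl u1 u2 w : ip (u1 + u2) w = ip u1 w + ip u2 w.
Proof. rewrite /ip -big_split; apply: eq_bigr => i _; by rewrite mxE rmorphD mulrDl. Qed.
Lemma ipZl c u w : ip (c *: u) w = c^* * ip u w.
Proof. rewrite /ip mulr_sumr; apply: eq_bigr => i _; by rewrite mxE rmorphM mulrA. Qed.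
Lemma ipC u w : ip w u = (ip u w)^*.
Proof. rewrite /ip rmorph_sum; apply: eq_bigr => i _; by rewrite rmorphM /= conjcK mulrC. Qed.
Lemma ip_self u : ip u u = (vnormsq u)%:C.
Proof. rewrite /ip /vnormsq rmorph_sum; apply: eq_bigr => i _; by rewrite conj_self. Qed.
Lemma vnormsq_ge0 u : 0 <= vnormsq u.
Proof. apply: sumr_ge0 => i _; rewrite /csq; nra. Qed.

Lemma psdP K : psd K <-> forall v, complex.Im (ip v (K *m v)) = 0 /\ 0 <= complex.Re (ip v (K *m v)).
Proof.
split=> H v; first by have := H v; rewrite -mulmxA ipE => /cge0.
by rewrite -mulmxA ipE; apply/cge0.
Qed.
Lemma expand K u w t : ip (u + t *: w) (K *m (u + t *: w)) =
  ip u (K*m u) + t * ip u (K *m w) + t^* * ip w (K *m u) + t^* * t * ip w (K *m w).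
Proof. rewrite mulmxDr -scalemxAr !ipDl !ipDr !ipZl !ipZr; ring. Qed.

Ltac cplx := rewrite ?(ReD, ImD, ReM, ImM, ReJ, ImJ, ReN, ImN, ReC, ImC) /=.

Lemma herm K u w : psd K -> ip w (K *m u) = (ip u (K *m w))^*.
Proof.
move=> /psdP hK.
have [h1 _] := hK (u + (1 +i* 0) *: w).
have [h2 _] := hK (u + (0 +i* 1) *: w).
have [ha _] := hK u. have [hc _] := hK w.
move: h1 h2; rewrite !expand.
move: ha hc.
set a := ip u _; set b := ip u _; set b' := ip w _; set c := ip w _.
case: a => a1 a2; case: b => b1 b2; case: b' => e1 e2; case: c => c1 c2 /=.
move=> ha hc h1 h2; apply/eqP; rewrite eq_complex /=; apply/andP; split; apply/eqP; lra.
Qed.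

Lemma cs K u w : psd K ->
  csq (ip u (K *m w)) <= complex.Re (ip u (K *m u)) * complex.Re (ip w (K *m w)).
Proof.
move=> hK.
have hb := @herm K u w hK.
have /psdP hK' := hK.
have [ha har] := hK' u. have [hc hcr] := hK' w.
have key : forall s : R, 0 <= complex.Re (ip u (K *m u)) + s^+2 * csq (ip u (K *m w)) * complex.Re (ip w (K *m w)) - 2 * s * csq (ip u (K *m w)).
  move=> s.
  have [_ h] := hK' (u + ((- s * complex.Re (ip u (K *m w))) +i* (s * complex.Im (ip u (K *m w)))) *: w).
  move: h; rewrite expand hb.
  move: ha hc har hcr.
  set a := ip u _; set b := ip u _; set c := ip w _.
  case: a => a1 a2; case: b => b1 b2; case: c => c1 c2 /= ha hc har hcr.
  rewrite /csq /= hc => h; apply: (le_trans h); rewrite le_eqVlt; apply/orP; left; apply/eqP; ring.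
move: har hcr key.
set ar := complex.Re _; set cr := complex.Re _; set B := csq _.
have B0 : 0 <= B by rewrite /B /csq; nra.
move=> har hcr key.
have [c0|cpos] := eqVneq cr 0.
  have [Bz|Bpos] := eqVneq B 0; first by rewrite Bz c0; lra.
  have Bp : 0 < B by rewrite lt_def Bpos B0.
  have := key ((ar + 1) / B); rewrite c0 mulr0 addr0.
  have -> : 2 * ((ar + 1) / B) * B = 2 * (ar + 1) by rewrite -mulrA divfK.
  lra.
have cp : 0 < cr by rewrite lt_def cpos hcr.
have := key cr^-1.
have e : cr^-1 ^+ 2 * B * cr = cr^-1 * B.
  by rewrite expr2 mulrC mulrA mulrA mulfV // mul1r mulrC.
rewrite e => h.
have eB : B = cr * (cr^-1 * B) by rewrite mulrA mulfV // mul1r.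
rewrite eB; move: h; rewrite -(mulrA 2); set t := cr^-1 * B => h; nra.
Qed.
Lemma psd1 : psd (1%:M : 'M[C]_d).
Proof. apply/psdP => v; rewrite mul1mx ip_self /=; split => //; exact: vnormsq_ge0. Qed.

Lemma ip_delta j v : ip (delta_mx j 0) v = v j 0.
Proof.
rewrite /ip (bigD1 j) //= big1 => [|i /negbTE ij]; rewrite !mxE ?eqxx ?ij /=.
  by rewrite addr0; case: (v j 0) => a b; apply/eqP; rewrite eq_complex /= !mul1r !oppr0 !mul0r subr0 addr0 !eqxx.
by case: (v i 0) => a b; apply/eqP; rewrite eq_complex /= !oppr0 !mul0r subr0 addr0 !eqxx.
Qed.

Lemma mul_delta K i j : (K *m (delta_mx j 0 : 'cV[C]_d)) i 0 = K i j.
Proof. by rewrite -colE mxE. Qed.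

Lemma ip_decomp K w : ip w (K *m w) = \sum_j ip w (K *m delta_mx j 0) * w j 0.
Proof.
rewrite /ip.
under [RHS]eq_bigr => j _ do rewrite mulr_suml.
rewrite exchange_big /=; apply: eq_bigr => i _.
rewrite mxE mulr_sumr; apply: eq_bigr => j _.
by rewrite mul_delta mulrA.
Qed.

Lemma trace_bound K w : psd K ->
  complex.Re (ip w (K *m w)) <= complex.Re (\tr K) * vnormsq w.
Proof.
move=> hK; have /psdP hK' := hK.
set Q := complex.Re (ip w (K *m w)).
set T := complex.Re (\tr K).
set N := vnormsq w.
have [_ Q0] := hK' w.
have N0 : 0 <= N by exact: vnormsq_ge0.
have gj : forall j, complex.Re (ip (delta_mx j 0) (K *m delta_mx j 0)) = complex.Re (K j j).
  by move=> j; rewrite ip_delta mul_delta.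
have T0 : 0 <= T.
  rewrite /T /mxtrace Re_sum; apply: sumr_ge0 => j _; rewrite -gj; exact: (hK' _).2.
have key : forall s : R, 2 * s * Q <= s ^+ 2 * Q * T + N.
  move=> s.
  rewrite {1}/Q ip_decomp Re_sum mulr_sumr /T /mxtrace Re_sum mulr_sumr /N /vnormsq -big_split /=.
  apply: ler_sum => j _.
  have := @cs K w (delta_mx j 0) hK; rewrite gj -/Q.
  set b := ip w _; rewrite /csq; case: b => b1 b2; case: (w j 0) => w1 w2 /= hb.
  have : 0 <= (s * b1 - w1) ^+ 2 + (s * b2 + w2) ^+ 2 by rewrite addr_ge0 ?sqr_ge0.
  have : s ^+ 2 * (b1 ^+ 2 + b2 ^+ 2) <= s ^+ 2 * (Q * complex.Re (K j j)) by apply: ler_wpM2l => //; nra.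
  move=> h1 h2; nra.
have [Nz|Npos] := eqVneq N 0.
  have := @cs 1%:M w (K *m w) psd1.
  rewrite !mul1mx ip_self ReC (Nz : vnormsq w = 0) mul0r /csq => h.
  have h2 : complex.Re (ip w (K *m w)) ^+ 2 <= 0 by nra.
  rewrite (Nz : N = 0) mulr0 /Q; nra.
have Np : 0 < N by rewrite lt_def Npos N0.
have [Qz|Qpos] := eqVneq Q 0; first by rewrite Qz; nra.
have Qp : 0 < Q by rewrite lt_def Qpos Q0.
have := key (N / Q).
have e1 : 2 * (N / Q) * Q = 2 * N by field.
have e2 : (N / Q) ^+ 2 * Q * T = N * (N / Q) * T by field.
rewrite e1 e2 => h.
have h3 : N <= N * (N / Q * T) by rewrite mulrA; lra.
have h4 : 1 <= N / Q * T.
  by move: h3; rewrite -{1}(mulr1 N) ler_pM2l.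
have : Q * 1 <= Q * (N / Q * T) by rewrite ler_pM2l.
have e3 : Q * (N / Q * T) = T * N by field.
by rewrite mulr1 e3.
Qed.
Lemma ipNr u w : ip u (- w) = - ip u w.
Proof. by rewrite -scaleN1r ipZr mulN1r. Qed.

Lemma le1 K w : psd (1%:M - K) -> complex.Re (ip w (K *m w)) <= vnormsq w.
Proof.
move=> /psdP /(_ w) [_]; rewrite mulmxBl mul1mx ipDr ipNr ip_self ReD ReN ReC; lra.
Qed.

Lemma reself u : complex.Re (ip u u) = vnormsq u.
Proof. by rewrite ip_self. Qed.

Lemma unit_bound G K v : psd G -> psd K -> psd (1%:M - K) -> vnormsq v = 1 ->
  vnormsq ((G + K) *m v) <= (1 + complex.Re (\tr G)) ^+ 2.
Proof.
move=> hG hK hK1 hv.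
have /psdP hG' := hG. have /psdP hK' := hK.
set T := complex.Re (\tr G).
have T0 : 0 <= T.
  have := @trace_bound G v hG; have [_ h] := hG' v; rewrite hv mulr1 -/T; lra.
set a := G *m v; set b := K *m v.
set al := vnormsq a; set be := vnormsq b; set ga := complex.Re (ip a b).
have al0 : 0 <= al by exact: vnormsq_ge0.
have be0 : 0 <= be by exact: vnormsq_ge0.
have eN : vnormsq ((G + K) *m v) = al + be + 2 * ga.
  rewrite mulmxDl -/a -/b -reself !ipDl !ipDr !ReD (ipC a b) ReJ !reself /al /be /ga; ring.
have hga : ga ^+ 2 <= al * be.
  have := @cs 1%:M a b psd1; rewrite !mul1mx !reself -/al -/be /ga /csq.
  case: (ip a b) => x y /=; nra.
have hbe : be <= 1.
  have := @cs K b v hK; rewrite -/b (ip_self b) /csq ReC ImC -/be.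
  have h1 := @le1 K b hK1; rewrite -/be in h1.
  have h2 := @le1 K v hK1; rewrite hv -/b in h2.
  have [_ h3] := hK' b. have [_ h4] := hK' v. rewrite -/b in h4.
  move=> h; nra.
have hal : al <= T ^+ 2.
  have := @cs G a v hG; rewrite -/a (ip_self a) /csq ReC ImC -/al.
  have h1 := @trace_bound G a hG; rewrite -/al -/T in h1.
  have h2 := @trace_bound G v hG; rewrite hv -/a -/T mulr1 in h2.
  have [_ h3] := hG' a. have [_ h4] := hG' v. rewrite -/a in h4.
  move=> h; nra.
rewrite eN; nra.
Qed.
Lemma psd0 : @psd R d 0.
Proof. apply/psdP => v; rewrite mul0mx -(scale0r 0) ipZr mul0r; split=> //. Qed.

Lemma psdD (A B : 'M[C]_d) : psd A -> psd B -> psd (A + B).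
Proof.
move=> /psdP hA /psdP hB; apply/psdP => v; rewrite mulmxDl ipDr ReD ImD.
have [h1 h2] := hA v; have [h3 h4] := hB v; split; [by rewrite h1 h3 addr0 | exact: addr_ge0].
Qed.

Lemma psd_sum (I : Type) (r : seq I) (P : pred I) (F : I -> 'M[C]_d) :
  (forall i, P i -> psd (F i)) -> psd (\sum_(i <- r | P i) F i).
Proof. move=> h; apply: big_ind => //; [exact: psd0 | exact: psdD]. Qed.

Lemma opnorm_le (A : 'M[C]_d) c : (0 < d)%N -> 0 <= c ->
  (forall v, vnormsq v = 1 -> vnormsq (A *m v) <= c ^+ 2) -> opnorm A <= c.
Proof.
move=> d0 c0 h; rewrite /opnorm.
apply: (le_trans (y := Num.sqrt (c ^+ 2))); last by rewrite sqrtr_sqr ger0_norm.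
rewrite ler_sqrt ?sqr_ge0 //; apply: ge_sup.
  pose e : 'cV[C]_d := delta_mx (Ordinal d0) 0.
  have he : vnormsq e = 1.
    by rewrite -reself ip_delta /e mxE !eqxx.
  by exists (vnormsq (A *m e)); exists e.
by move=> y [v hv <-]; exact: h.
Qed.
Lemma trace_ge0 K : psd K -> 0 <= complex.Re (\tr K).
Proof.
move=> /psdP hK; rewrite /mxtrace Re_sum; apply: sumr_ge0 => j _.
have [_ h] := hK (delta_mx j 0); by rewrite ip_delta mul_delta in h.
Qed.

Lemma Re_nat n : complex.Re (n%:R : C) = n%:R.
Proof. by elim: n => // n IH; rewrite !mulrS ReD IH. Qed.

Lemma trRe_sum (I : Type) (r : seq I) (P : pred I) (F : I -> 'M[C]_d) :
  complex.Re (\tr (\sum_(i <- r | P i) F i)) = \sum_(i <- r | P i) complex.Re (\tr (F i)).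
Proof. elim/big_rec2: _ => [|i y1 y2 _ <-]; by rewrite ?mxtrace0 ?mxtraceD ?ReD. Qed.

Lemma main_sec (hd : (2 <= d)%N) (M1 M2 : 'I_d -> 'M[C]_d) :
  is_povm M1 -> is_povm M2 -> compatible M1 M2 ->
  Pqrac M1 M2 <= 2^-1 * (1 + (d%:R)^-1).
Proof.
move=> _ _ [G [[hGpsd hGsum] [hM1 hM2]]].
have d0 : (0 < d)%N by apply: leq_trans hd.
have hsum : \sum_x \sum_y G x y = 1%:M by rewrite pair_bigA.
have bound : forall x y, opnorm (M1 x + M2 y) <= 1 + complex.Re (\tr (G x y)).
  move=> x y.
  set K := M1 x + M2 y - G x y.
  have eA : M1 x + M2 y = G x y + K by rewrite /K addrCA subrr addr0.
  have hG : psd (G x y) := hGpsd (x, y).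
  have e1 : M1 x = G x y + \sum_(y' | y' != y) G x y' by rewrite -hM1 (bigD1 y).
  have e2 : M2 y = G x y + \sum_(x' | x' != x) G x' y by rewrite -hM2 (bigD1 x).
  have hK : psd K.
    have -> : K = \sum_(y' | y' != y) G x y' + M2 y.
      by rewrite /K e1; apply/matrixP => i j; rewrite !mxE; ring.
    apply: psdD; first by apply: psd_sum => y' _; exact: (hGpsd (x, y')).
    by rewrite -hM2; apply: psd_sum => x' _; exact: (hGpsd (x', y)).
  have hK1 : psd (1%:M - K).
    have -> : 1%:M - K = \sum_(x' | x' != x) \sum_(y' | y' != y) G x' y'.
      rewrite -hsum (bigD1 x) //= hM1.
      have e4 : \sum_(x' | x' != x) \sum_y' G x' y' = \sum_(x' | x' != x) G x' y + \sum_(x' | x' != x) \sum_(y' | y' != y) G x' y'.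
        by rewrite -big_split; apply: eq_bigr => x' _; rewrite (bigD1 y).
      rewrite e4 /K e2.
      set S := \sum_(x' | _) \sum_(y' | _) _.
      set s2 := \sum_(x' | _) _.
      by apply/matrixP => i j; rewrite !mxE; ring.
    by apply: psd_sum => x' _; apply: psd_sum => y' _; exact: (hGpsd (x', y')).
  rewrite eA; apply: opnorm_le => //.
    by have := @trace_ge0 _ hG; lra.
  by move=> v hv; exact: unit_bound.
rewrite /Pqrac.
have eT : \sum_x \sum_y complex.Re (\tr (G x y)) = d%:R.
  transitivity (complex.Re (\tr (\sum_x \sum_y G x y))).
    rewrite trRe_sum; apply: eq_bigr => x _; by rewrite trRe_sum.
  by rewrite hsum mxtrace1 Re_nat.
have hS : \sum_(x < d) \sum_(y < d) opnorm (M1 x + M2 y) <= (d%:R) ^+ 2 + d%:R.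
  apply: (le_trans (y := \sum_(x < d) \sum_(y < d) (1 + complex.Re (\tr (G x y))))).
    by apply: ler_sum => x _; apply: ler_sum => y _; exact: bound.
  under eq_bigr do rewrite big_split /=.
  rewrite big_split /= eT.
  by rewrite !sumr_const !card_ord expr2 mulr_natr.
have dn : (d%:R : R) != 0 by rewrite pnatr_eq0 -lt0n.
apply: (le_trans (ler_wpM2l _ hS)).
  by rewrite invr_ge0 mulr_ge0 // sqr_ge0.
have -> : (2 * d%:R ^+ 2)^-1 * (d%:R ^+ 2 + d%:R) = 2^-1 * (1 + (d%:R)^-1) :> R by field.
by [].
Qed.
End S.

Local Close Scope complex_scope.

Theorem theorem1 (R : realType) (d : nat) (hd : (2 <= d)%N)
    (M1 M2 : 'I_d -> 'M[R[i]]_d) :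
  is_povm M1 -> is_povm M2 -> compatible M1 M2 ->
  Pqrac M1 M2 <= 2^-1 * (1 + (d%:R)^-1).
Proof. exact: main_sec. Qed.
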